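(* For every integer $c \ge 4$ and every $n \ge 3$, there is no wait-free algorithm for the $c$-cycle agreement problem among $n$ processes in the non-uniform iterated immediate snapshot (NIIS) model.
   Context: Graphical approximate agreement on a connected undirected graph $G=(V,E)$ (known to all processes): each process $p_i$ receives an input vertex $x_i \in V$ and each process that does not crash must output a vertex $y_i \in V$ such that (agreement) any two output vertices are equal or adjacent in $G$, and (validity) every output vertex lies on some shortest path in $G$ between two (not necessarily distinct) input vertices. The $c$-cycle agreement problem is graphical approximate agreement on the cycle graph with vertices $0,1,\dots,c-1$ and edges $\{a,a+1 \bmod c\}$; every vertex is a possible input. NIIS model: processes $p_0,\dots,p_{n-1}$ communicate through an infinite sequence $S_1,S_2,\dots$ of single-writer atomic snapshot objects, each with $n$ components initially $-$; $\mathsf{update}(x)$ by $p_i$ sets component $i$ to $x$, and $\mathsf{scan}$ returns all components atomically. Initially the state of $p_i$ is its identifier and its input. The scheduler repeatedly selects a nonempty set of processes all poised to access the same snapshot object $S_r$; each of them performs $\mathsf{update}$ of its own component of $S_r$ with its current state, and then each of them performs one $\mathsf{scan}$ of $S_r$; its new state is its identifier together with the scan result. A deterministic function $\Delta$ of the state decides, after each scan, whether the process outputs a value (and terminates) or continues with the next snapshot object. An algorithm is wait-free if there is no infinite schedule from any initial configuration. *)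

(* Defs.v *)
From Stdlib Require Import Relations.
From mathcomp Require Import all_boot.

Set Implicit Arguments.
Unset Strict Implicit.
Unset Printing Implicit Defensive.

Definition cycle_adj (c : nat) (a b : 'I_c) : bool :=
  (val b == (val a).+1 %% c) || (val a == (val b).+1 %% c).

Definition cycle_walk (c : nat) (u v : 'I_c) (p : seq 'I_c) : bool :=
  path (@cycle_adj c) u p && (last u p == v).

Definition cycle_shortest_path (c : nat) (u v : 'I_c) (p : seq 'I_c) : Prop :=
  cycle_walk u v p /\ forall q, cycle_walk u v q -> size p <= size q.

Definition on_shortest_path (c : nat) (u v y : 'I_c) : Prop :=
  exists p, cycle_shortest_path u v p /\ y \in u :: p.

(* Local state of a process: initially its identifier and its input; after   *)
(* a scan, its identifier together with the scan result (n components, each  *)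
(* either "-" = None or the state written by a process).                    *)
Inductive state (n c : nat) : Type :=
| SInit of 'I_n & 'I_c
| SView of 'I_n & ('I_n -> option (state n c)).

(* An algorithm is the deterministic decision map Delta, applied after each  *)
(* scan: Some y = output y and terminate, None = continue.                   *)
Definition algorithm (n c : nat) := state n c -> option 'I_c.

(* Status of a process: poised to access snapshot object S_r with local     *)
(* state s, or terminated with output y.                                     *)
Inductive status (n c : nat) : Type :=
| Poised of nat & state n c
| Done of 'I_c.

Record config (n c : nat) : Type := Config {
  cstatus : 'I_n -> status n c;
  cmem : nat -> 'I_n -> option (state n c)  (* contents of S_r *)
}.

Definition init_config (n c : nat) (x : 'I_n -> 'I_c) : config n c :=
  Config (fun i => Poised 1 (SInit i (x i))) (fun _ _ => None).

Definition written (n c : nat) (cfg : config n c) (P : {set 'I_n}) (r : nat)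
  : 'I_n -> option (state n c) :=
  fun j => if j \in P then
             match cstatus cfg j with
             | Poised _ s => Some s
             | Done _ => cmem cfg r j
             end
           else cmem cfg r j.

(* One scheduler step: a nonempty set P of processes, all poised on the same *)
(* S_r, each update S_r with its state, then each scans S_r; the new state  *)
Definition step (n c : nat) (Delta : algorithm n c)
  (cfg : config n c) (P : {set 'I_n}) (cfg' : config n c) : Prop :=
  P != set0 /\
  exists r : nat,
    (forall i, i \in P -> exists s, cstatus cfg i = Poised r s) /\
    let w := written cfg P r in
    cfg' = Config
      (fun j => if j \in P then
                  match Delta (SView j w) with
                  | Some y => Done n y
                  | None => Poised r.+1 (SView j w)
                  end
                else cstatus cfg j)
      (fun r' => if r' == r then w else cmem cfg r').

Definition step_any (n c : nat) (Delta : algorithm n c)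
  (cfg cfg' : config n c) : Prop :=
  exists P, step Delta cfg P cfg'.

Definition reachable (n c : nat) (Delta : algorithm n c) (x : 'I_n -> 'I_c)
  (cfg : config n c) : Prop :=
  clos_refl_trans _ (@step_any n c Delta) (init_config x) cfg.

Definition wait_free (n c : nat) (Delta : algorithm n c) : Prop :=
  forall x : 'I_n -> 'I_c,
    ~ exists (cfgs : nat -> config n c) (Ps : nat -> {set 'I_n}),
        cfgs 0 = init_config x /\
        forall k, step Delta (cfgs k) (Ps k) (cfgs k.+1).

(* The algorithm's outputs satisfy agreement and validity for the c-cycle    *)
(* agreement problem in every execution (every input vector, every finite    *)
(* schedule; crashed processes are those no longer scheduled).               *)
Definition solves_cycle_agreement (n c : nat) (Delta : algorithm n c) : Prop :=
  forall (x : 'I_n -> 'I_c) (cfg : config n c), reachable Delta x cfg ->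
    (forall i j yi yj, cstatus cfg i = Done n yi -> cstatus cfg j = Done n yj ->
        (yi == yj) || cycle_adj yi yj) /\
    (forall i y, cstatus cfg i = Done n y ->
        exists p q : 'I_n, on_shortest_path (x p) (x q) y).

(* Main.v *)
Require Import Defs.
From mathcomp Require Import all_boot.
From mathcomp Require Import zify.
From Stdlib Require Import Relations Wellfounded ClassicalEpsilon FunctionalExtensionality PropExtensionality Classical.
Set Implicit Arguments. Unset Strict Implicit. Unset Printing Implicit Defensive.

Fixpoint ins (x : nat) (p : seq (seq nat)) : seq (seq (seq nat)) :=
  match p with
  | [::] => [:: [:: [:: x]]]
  | B :: p' => ([:: x] :: B :: p') :: ((x :: B) :: p') :: [seq B :: q | q <- ins x p']
  end.
Fixpoint opart (s : seq nat) : seq (seq (seq nat)) :=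
  match s with [::] => [:: [::]] | x :: s' => flatten [seq ins x p | p <- opart s'] end.
Definition lab3 : seq nat := [:: 0; 1; 2].
Definition inpart (l : nat) (p : seq (seq nat)) := has (fun B => l \in B) p.
Definition view (p : seq (seq nat)) (l : nat) : seq nat :=
  if inpart l p then [seq m <- lab3 | inpart m (take (find (fun B => l \in B) p).+1 p)] else [::].
Definition key (F : seq nat) (p : seq (seq nat)) := [seq view p l | l <- F].
Definition xorl (s : seq bool) := foldr addb false s.
Definition sub3 (a0 a1 a2 : bool) : seq nat := [seq l <- lab3 | nth false [:: a0; a1; a2] l].


Definition red (L : seq (seq (seq nat))) := [seq v <- undup L | odd (count_mem v L)].

Lemma xorl_big (T : Type) (g : T -> bool) L : xorl (map g L) = \big[addb/false]_(x <- L) g x.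
Proof. by elim: L => [|x L IH]; rewrite ?big_nil ?big_cons //= IH. Qed.

Lemma iterop_addb k b : iterop k addb b false = odd k && b.
Proof. by case: k => // k; elim: k => //= k ->; case: b; case: (odd k). Qed.

Lemma xorl_red (g : seq (seq nat) -> bool) L : xorl (map g L) = xorl (map g (red L)).
Proof.
rewrite !xorl_big /red big_filter -big_undup_iterop_count big_mkcond.
elim: (undup L) => [|x s IH]; rewrite ?big_nil ?big_cons //= IH iterop_addb; by case: ifP.
Qed.

Lemma xorl_perm (g : seq (seq nat) -> bool) L1 L2 : perm_eq L1 L2 -> xorl (map g L1) = xorl (map g L2).
Proof. by move=> h; rewrite !xorl_big; apply: perm_big. Qed.

Lemma xorl_mapk F (G : seq (seq nat) -> bool) L :
  xorl [seq G (key F p) | p <- L] = xorl [seq G k | k <- [seq key F p | p <- L]].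
Proof. by rewrite -map_comp. Qed.

Lemma comb (a0 a1 a2 f0 f1 f2 : bool) (G : seq (seq nat) -> bool) :
  count (fun l => l \notin sub3 f0 f1 f2) (sub3 a0 a1 a2) <= 1 ->
  xorl (map (fun p => G (key (sub3 f0 f1 f2) p)) (opart (sub3 a0 a1 a2))) =
  xorl (map (fun p => G (key (sub3 f0 f1 f2) p))
     (opart [seq l <- sub3 a0 a1 a2 | l \in sub3 f0 f1 f2])).
Proof.
move=> h; rewrite !xorl_mapk [LHS]xorl_red [RHS]xorl_red.
apply: xorl_perm; move: h.
by case: a0; case: a1; case: a2; case: f0; case: f1; case: f2; vm_compute.
Qed.

Lemma inpart_flatten l p : inpart l p = (l \in flatten p).
Proof. by elim: p => [|B p IH] //=; rewrite mem_cat IH. Qed.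

Lemma ins_perm x p q : q \in ins x p -> perm_eq (flatten q) (x :: flatten p).
Proof.
elim: p q => [|B p IH] q /=.
  by rewrite inE => /eqP ->.
rewrite !inE => /orP [/eqP -> | /orP [/eqP -> | /mapP [q' hq' ->]]] //=.
apply: (@perm_trans _ (B ++ x :: flatten p)); first by rewrite perm_cat2l (IH _ hq').
by rewrite -(cat1s x (B ++ _)) -(cat1s x (flatten p)) perm_catCA.
Qed.

Lemma opart_perm s p : p \in opart s -> perm_eq (flatten p) s.
Proof.
elim: s p => [|x s IH] p /=; first by rewrite inE => /eqP ->.
case/flattenP => q /mapP [p0 hp0 ->] hp.
by apply: perm_trans (ins_perm hp) _; rewrite perm_cons IH.
Qed.

Lemma opart_cover s p l : p \in opart s -> inpart l p = (l \in s).
Proof. by move=> h; rewrite inpart_flatten (perm_mem (opart_perm h)). Qed.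

Lemma ins_nonempty x p q : q \in ins x p -> all (fun B => B != [::]) p -> all (fun B => B != [::]) q.
Proof.
elim: p q => [|B p IH] q /=; first by rewrite inE => /eqP ->.
rewrite !inE => /orP [/eqP -> | /orP [/eqP -> | /mapP [q' hq' ->]]] /andP [hB h] /=;
  rewrite ?hB ?h //; exact: IH.
Qed.

Lemma opart_nonempty s p : p \in opart s -> all (fun B => B != [::]) p.
Proof.
elim: s p => [|x s IH] p /=; first by rewrite inE => /eqP ->.
case/flattenP => q /mapP [p0 hp0 ->] hp.
exact: ins_nonempty hp (IH _ hp0).
Qed.

Lemma tri_nat C a b d : 3 < C -> a < C -> b < C -> d < C ->
  (a == b) || [|| b == a + 1, (a == C - 1) && (b == 0), a == b + 1 | (b == C - 1) && (a == 0)] ->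
  (a == d) || [|| d == a + 1, (a == C - 1) && (d == 0), a == d + 1 | (d == C - 1) && (a == 0)] ->
  (b == d) || [|| d == b + 1, (b == C - 1) && (d == 0), b == d + 1 | (d == C - 1) && (b == 0)] ->
  ((b == 0) && (d == 1) || (b == 1) && (d == 0)) (+) (((a == 0) && (d == 1) || (a == 1) && (d == 0)) (+) (((a == 0) && (b == 1) || (a == 1) && (b == 0)) (+) false)) = false.
Proof. move: a b d => [|[|a]] [|[|b]] [|[|d]] *; simpl in *; lia. Qed.

Lemma rim_nat C j x y : 3 < C -> 0 < j < C ->
  (x == j) || (x == if j.+1 == C then 0 else j.+1) ->
  (y == j) || (y == if j.+1 == C then 0 else j.+1) ->
  ((x == 0) && (y == 1) || (x == 1) && (y == 0)) = false.
Proof. by move=> h1 h2; case: (j.+1 =P C) => h hx hy; lia. Qed.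

Section Model.
Variables (n c : nat).
Local Notation N := n.+3.
Local Notation C := c.+1.
Variable Delta : algorithm N C.

Inductive ast := ADone of 'I_C | AAct of state N C.

Definition proc (l : nat) : 'I_N := inord l.
Definition dstate : state N C := SInit ord0 ord0.
Definition sof (a : ast) := match a with AAct s => s | ADone _ => dstate end.
Definition oof (a : ast) : 'I_C := match a with ADone y => y | AAct _ => ord0 end.
Definition isact (a : ast) := if a is AAct _ then true else false.
Definition memW (st : nat -> ast) (W : seq nat) : 'I_N -> option (state N C) :=
  fun j => if (val j < 3) && (val j \in W) then Some (sof (st (val j))) else None.
Definition dec (j : 'I_N) (w : 'I_N -> option (state N C)) : ast :=
  match Delta (SView j w) with Some y => ADone y | None => AAct (SView j w) end.
Definition upd (st : nat -> ast) l V : ast :=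
  match st l with ADone y => ADone y | AAct _ => dec (proc l) (memW st V) end.
Definition next (st : nat -> ast) p l := if inpart l p then upd st l (view p l) else st l.
Definition actS (S : seq nat) (st : nat -> ast) := [seq l <- S | isact (st l)].
Definition outs (S : seq nat) (st : nat -> ast) := [seq oof (st l) | l <- S].

Inductive Par (w : seq 'I_C -> bool) (S : seq nat) : (nat -> ast) -> bool -> Prop :=
| PLeaf st : actS S st = [::] -> Par w S st (w (outs S st))
| PNode st (f : seq (seq nat) -> bool) : actS S st != [::] ->
    (forall p, p \in opart (actS S st) -> Par w S (next st p) (f p)) ->
    Par w S st (xorl (map f (opart (actS S st)))).

Lemma Par_uniq w S st b1 b2 : Par w S st b1 -> Par w S st b2 -> b1 = b2.
Proof.
move=> h; elim: h b2 => [st0 h0 | st0 f hne hch IH] b2 h2; inversion h2; subst => //.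
- by move: H; rewrite h0.
- by move: hne; rewrite H.
- congr xorl; apply/eq_in_map => p hp.
  exact: IH _ hp _ (H0 _ hp).
Qed.

Definition par w S st := epsilon (inhabits false) (Par w S st).

Lemma parE w S st b : Par w S st b -> par w S st = b.
Proof.
move=> h; apply: (Par_uniq (w := w) (S := S) (st := st)) => //.
by apply: epsilon_spec; exists b.
Qed.

Lemma view_in p l m : m \in view p l -> inpart m p.
Proof.
rewrite /view; case: ifP => // _; rewrite mem_filter => /andP [h _].
move: h; rewrite !inpart_flatten => h; rewrite -(cat_take_drop (find (fun B => l \in B) p).+1 p).
by rewrite flatten_cat mem_cat h.
Qed.

Lemma Par_ext w S st st' b : (forall l, l \in S -> st l = st' l) ->
  Par w S st b -> Par w S st' b.
Proof.
move=> hS h; elim: h st' hS => [st0 h0 | st0 f hne hch IH] st' hS.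
- have e1 : actS S st' = actS S st0 by apply: eq_in_filter => l hl; rewrite hS.
  have e2 : outs S st' = outs S st0 by apply/eq_in_map => l hl; rewrite hS.
  by rewrite -e2; apply: PLeaf; rewrite e1.
- have e1 : actS S st' = actS S st0 by apply: eq_in_filter => l hl; rewrite hS.
  rewrite -e1; apply: PNode; rewrite e1 // => p hp; apply: IH => // l hl.
  rewrite /next; case: ifP => // hin; rewrite /upd -hS //.
  case: (st0 l) => // _; congr dec; apply: functional_extensionality => j.
  rewrite /memW; case: ifP => // /andP [_ hj]; rewrite hS //.
  have := view_in hj; rewrite (opart_cover _ hp) mem_filter => /andP [_ ->] //.
Qed.

Lemma par_ext w S st st' : (forall l, l \in S -> st l = st' l) -> par w S st = par w S st'.
Proof.
move=> hS; rewrite /par; congr epsilon; apply: functional_extensionality => b.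
apply: propositional_extensionality; split; apply: Par_ext => // l hl; by rewrite hS.
Qed.


Definition toS r (a : ast) : status N C :=
  match a with AAct s => Poised r s | ADone y => Done N y end.

Lemma procK l : l < 3 -> val (proc l) = l.
Proof. by move=> h; apply: inordK; apply: leq_trans h _. Qed.

Lemma proc_val (j : 'I_N) : val j < 3 -> proc (val j) = j.
Proof. by move=> _; rewrite /proc inord_val. Qed.

Lemma t_rt (T : Type) (R : relation T) x y z :
  clos_trans _ R x y -> clos_refl_trans _ R y z -> clos_trans _ R x z.
Proof.
move=> h1 h2; elim: h2 x h1 => [y0 z0 h | y0 | y0 z0 w0 _ IH1 _ IH2] x h1 //.
- exact: t_trans h1 (t_step _ _ _ _ h).
- exact: IH2 (IH1 _ h1).
Qed.

Lemma t_rt' (T : Type) (R : relation T) x y : clos_trans _ R x y -> clos_refl_trans _ R x y.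
Proof. elim => [a b h | a b d _ h1 _ h2]; [exact: rt_step | exact: rt_trans h1 h2]. Qed.

Lemma blocks_sim r st p W (cfg : config N C) :
  (forall m, inpart m p -> [/\ m < 3, m \notin W & cstatus cfg (proc m) = Poised r (sof (st m))]) ->
  uniq (flatten p) -> all (fun B => B != [::]) p ->
  cmem cfg r = memW st W ->
  exists cfg', clos_refl_trans _ (step_any Delta) cfg cfg' /\
    (p != [::] -> clos_trans _ (step_any Delta) cfg cfg') /\
    cmem cfg' r = memW st (W ++ flatten p) /\
    (forall r', r' != r -> cmem cfg' r' = cmem cfg r') /\
    (forall j, cstatus cfg' j = if (val j < 3) && inpart (val j) p then
       toS r.+1 (dec j (memW st (W ++ flatten (take (find (fun B => val j \in B) p).+1 p))))
       else cstatus cfg j).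
Proof.
elim: p W cfg => [|B p IH] W cfg H1 hu hne hmem.
  exists cfg; split; first exact: rt_refl.
  split => //; split; first by rewrite cats0.
  by split => // j; rewrite /= andbF.
set P : {set 'I_N} := [set j : 'I_N | (val j < 3) && (val j \in B)].
set w := written cfg P r.
set cfg1 := Config (fun j => if j \in P then match Delta (SView j w) with
      Some y => Done N y | None => Poised r.+1 (SView j w) end else cstatus cfg j)
   (fun r' => if r' == r then w else cmem cfg r').
move: hu hne; rewrite /= cat_uniq => /and3P [huB hdis hup] /andP [hB hne].
have hP : forall i, i \in P -> [/\ val i < 3, val i \in B & cstatus cfg i = Poised r (sof (st (val i)))].
  move=> i; rewrite inE => /andP [hi hiB].
  have := H1 (val i); rewrite /inpart /= hiB => /(_ isT) [_ _ h].
  by split => //; rewrite -h proc_val.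
have hstep : step Delta cfg P cfg1.
  split.
    have hmB : nth 0 B 0 \in B by apply: mem_nth; rewrite lt0n size_eq0.
    have := H1 (nth 0 B 0); rewrite /inpart /= hmB => /(_ isT) [hm _ _].
    by apply/set0Pn; exists (proc (nth 0 B 0)); rewrite inE procK // hm hmB.
  exists r; split => // i hi; have [_ _ ->] := hP i hi; by eexists.
have hw : w = memW st (W ++ B).
  apply: functional_extensionality => j; rewrite /w /written.
  case: ifP => hj.
    by have [h3 hjB ->] := hP j hj; rewrite /memW h3 mem_cat hjB orbT.
  rewrite hmem /memW mem_cat; move: hj; rewrite inE.
  by case: (val j < 3) => //= ->; rewrite orbF.
have H1' : forall m, inpart m p -> [/\ m < 3, m \notin W ++ B & cstatus cfg1 (proc m) = Poised r (sof (st m))].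
  move=> m hm; have := H1 m; rewrite /inpart /= -/(inpart m p) hm orbT => /(_ isT) [h3 hW hs].
  have hmB : m \notin B.
    apply/negP => hmB; move/hasP: hdis; apply; exists m => //.
    by rewrite -inpart_flatten.
  split => //; first by rewrite mem_cat negb_or hW.
  by rewrite /cfg1 /= inE procK // (negbTE hmB) andbF.
have hmem' : cmem cfg1 r = memW st (W ++ B) by rewrite /cfg1 /= eqxx hw.
have [cfg' [hrt [ht [hm1 [hm2 hst]]]]] := IH (W ++ B) cfg1 H1' hup hne hmem'.
have ht1 : clos_trans _ (step_any Delta) cfg cfg' by apply: t_rt (t_step _ _ _ _ _) hrt; exists P.
exists cfg'; split; first exact: t_rt'.
split => //; split; first by rewrite hm1 /= catA.
split.
  by move=> r' hr'; rewrite hm2 // /cfg1 /= (negbTE hr').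
move=> j; rewrite hst /cfg1 /= inE.
case hj3 : (val j < 3) => //=.
case hjB : (val j \in B) => /=.
  have -> : inpart (val j) p = false.
    apply/negP => hjp; move/hasP: hdis; apply; exists (val j) => //.
    by rewrite -inpart_flatten.
  by rewrite take0 /= cats0 -hw /dec; case: (Delta _).
case: ifP => // _.
by rewrite catA.
Qed.


Definition matches r (S : seq nat) (st : nat -> ast) (cfg : config N C) :=
  (forall l, l \in S -> cstatus cfg (proc l) = toS r (st l)) /\
  (forall r', r <= r' -> forall j, cmem cfg r' j = None).

Lemma mem_lab3 m : (m \in lab3) = (m < 3).
Proof. by case: m => [|[|[|m]]]. Qed.

Lemma round_sim r S st cfg p : all (fun l => l < 3) S -> uniq S -> matches r S st cfg ->
  p \in opart (actS S st) ->
  exists cfg', clos_refl_trans _ (step_any Delta) cfg cfg' /\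
    (p != [::] -> clos_trans _ (step_any Delta) cfg cfg') /\ matches r.+1 S (next st p) cfg'.
Proof.
move=> h3 hu [hs hm] hp.
have hin : forall m, inpart m p -> m \in S /\ isact (st m).
  by move=> m; rewrite (opart_cover _ hp) mem_filter => /andP [].
have H1 : forall m, inpart m p -> [/\ m < 3, m \notin [::] & cstatus cfg (proc m) = Poised r (sof (st m))].
  move=> m /hin [hmS ha]; split => //; first exact: (allP h3).
  by rewrite hs //; case: (st m) ha.
have hmem : cmem cfg r = memW st [::].
  by apply: functional_extensionality => j; rewrite hm // /memW andbF.
have hun : uniq (flatten p) by rewrite (perm_uniq (opart_perm hp)) filter_uniq.
have [cfg' [hrt [ht [hm1 [hm2 hst]]]]] := blocks_sim H1 hun (opart_nonempty hp) hmem.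
exists cfg'; split => //; split => //; split.
  move=> l hl; have hl3 : l < 3 := allP h3 l hl.
  rewrite hst procK // hl3 /= /next.
  case: ifP => hlp.
    have [_] := hin l hlp; rewrite /upd /toS; case: (st l) => // s _.
    congr toS; congr dec; apply: functional_extensionality => j.
    rewrite /memW /view hlp mem_filter mem_lab3 -inpart_flatten.
    by case: (val j < 3); rewrite ?andbF ?andbT.
  rewrite hs //; have : l \notin actS S st by rewrite -(opart_cover _ hp) hlp.
  by rewrite mem_filter hl andbT; case: (st l).
move=> r' hr' j; rewrite hm2; first by apply: hm; apply: ltnW.
by rewrite neq_ltn hr' orbT.
Qed.


Hypothesis wf : wait_free Delta.

Definition Rs (a b : config N C) := step_any Delta b a.
Definition Rt (a b : config N C) := clos_trans _ (step_any Delta) b a.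

Lemma acc_init X : Acc Rs (init_config X).
Proof.
apply: NNPP => hna.
pose P := fun x => ~ Acc Rs x.
have lem : forall x, P x -> exists yP : config N C * {set 'I_N}, step Delta x yP.2 yP.1 /\ P yP.1.
  move=> x hx; apply: NNPP => hn; apply: hx; constructor => y [Q hQ].
  apply: NNPP => hy; apply: hn; by exists (y, Q).
pose F (x : {x | P x}) : {yP : config N C * {set 'I_N} | step Delta (sval x) yP.2 yP.1 /\ P yP.1} :=
  constructive_indefinite_description _ (lem _ (svalP x)).
pose g (x : {x | P x}) : {x | P x} := exist _ (sval (F x)).1 (proj2 (svalP (F x))).
pose x0 : {x | P x} := exist _ (init_config X) hna.
apply: (wf (x := X)); exists (fun k => sval (iter k g x0)), (fun k => (sval (F (iter k g x0))).2).
split => // k; rewrite iterS /=; exact: (proj1 (svalP (F _))).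
Qed.

Lemma acc_rt x y : Acc Rs x -> clos_refl_trans _ (step_any Delta) x y -> Acc Rs y.
Proof.
move=> ha h; revert ha; induction h as [a b hab | a | a b d _ IH1 _ IH2]; move=> ha.
- by apply: (Acc_inv ha); exact: hab.
- exact: ha.
- exact: IH2 (IH1 ha).
Qed.

Lemma ct_transp a b : clos_trans _ (step_any Delta) b a -> clos_trans _ Rs a b.
Proof.
elim => [x y h | x y z _ h1 _ h2]; first exact: t_step.
exact: t_trans h2 h1.
Qed.

Lemma acc_Rt_of x : Acc (clos_trans _ Rs) x -> Acc Rt x.
Proof.
elim => y _ IH; constructor => z hz; apply: IH; exact: ct_transp.
Qed.

Lemma acc_reach X cfg : reachable Delta X cfg -> Acc Rt cfg.
Proof.
move=> h; apply: acc_Rt_of; apply: Acc_clos_trans; exact: acc_rt (acc_init X) h.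
Qed.

Lemma list_choice (T : eqType) (L : seq T) (Q : T -> bool -> Prop) :
  (forall x, x \in L -> exists b, Q x b) -> exists f : T -> bool, forall x, x \in L -> Q x (f x).
Proof.
elim: L => [|x L IH] h; first by exists (fun _ => false).
have [b0 hb0] := h x (mem_head _ _).
have [f hf] := IH (fun y hy => h y (@mem_behead _ (x :: L) y hy)).
exists (fun y => if y == x then b0 else f y) => y; rewrite inE.
by case: eqP => [-> | _] //= /hf.
Qed.

Lemma par_exists w S : all (fun l => l < 3) S -> uniq S ->
  forall cfg, Acc Rt cfg -> forall r st, matches r S st cfg -> exists b, Par w S st b.
Proof.
move=> h3 hu cfg ha; elim: ha => {}cfg _ IH r st hm.
case: (actS S st =P [::]) => hA; first by eexists; apply: PLeaf.
have : forall p, p \in opart (actS S st) -> exists b, Par w S (next st p) b.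
  move=> p hp; have [cfg' [_ [ht hm']]] := round_sim h3 hu hm hp.
  apply: (IH cfg' _ r.+1 _ hm'); apply: ht; apply/eqP => hp0.
  move: hA; case: (actS S st) hp => // l A' hp _.
  by move: (opart_cover l hp); rewrite hp0 inE eqxx.
case/list_choice => f hf; exists (xorl (map f (opart (actS S st)))); apply: PNode; [by apply/eqP | exact: hf].
Qed.

Definition Good X S st := exists r cfg, reachable Delta X cfg /\ matches r S st cfg.

Lemma good_par w X S st : all (fun l => l < 3) S -> uniq S -> Good X S st -> Par w S st (par w S st).
Proof.
move=> h3 hu [r [cfg [hr hm]]]; have [b hb] := par_exists w h3 hu (acc_reach hr) hm.
by rewrite (parE hb).
Qed.

Lemma good_child X S st p : all (fun l => l < 3) S -> uniq S -> Good X S st ->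
  p \in opart (actS S st) -> Good X S (next st p).
Proof.
move=> h3 hu [r [cfg [hr hm]]] hp; have [cfg' [hrt [_ hm']]] := round_sim h3 hu hm hp.
by exists r.+1, cfg'; split => //; exact: rt_trans hr hrt.
Qed.

Lemma good_sub X S F st : {subset F <= S} -> Good X S st -> Good X F st.
Proof.
move=> hFS [r [cfg [hr [hm1 hm2]]]]; exists r, cfg; split => //; split => // l hl.
exact: hm1 (hFS _ hl).
Qed.


Definition rmk (k : nat) (S : seq nat) := [seq l <- S | l != k].
Definition canon (S : seq nat) := S = [seq l <- lab3 | l \in S].

Lemma canon_all3 S : canon S -> all (fun l => l < 3) S.
Proof. move=> ->; apply/allP => l; rewrite mem_filter mem_lab3 => /andP [] //. Qed.

Lemma canon_uniq S : canon S -> uniq S.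
Proof. by move=> ->; rewrite filter_uniq. Qed.

Lemma sub3E (P : pred nat) : [seq l <- lab3 | P l] = sub3 (P 0) (P 1) (P 2).
Proof. by []. Qed.

Lemma filterC (T : Type) (p1 p2 : pred T) s :
  [seq x <- [seq x <- s | p1 x] | p2 x] = [seq x <- [seq x <- s | p2 x] | p1 x].
Proof. by rewrite -!filter_predI; apply: eq_filter => x /=; rewrite andbC. Qed.

Lemma xorl_false (T : Type) (L : seq T) : xorl (map (fun _ => false) L) = false.
Proof. by elim: L. Qed.

Lemma xorl_addb (T : Type) (f g : T -> bool) L :
  xorl (map (fun k => f k (+) g k) L) = xorl (map f L) (+) xorl (map g L).
Proof. by elim: L => //= x L ->; rewrite addbACA. Qed.

Lemma xorl_swap (T1 T2 : Type) (g : T1 -> T2 -> bool) L S :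
  xorl (map (fun p => xorl (map (g p) S)) L) = xorl (map (fun k => xorl (map (fun p => g p k) L)) S).
Proof.
elim: L => [|p L IH] /=; first by rewrite xorl_false.
by rewrite IH xorl_addb.
Qed.

Definition stK (st : nat -> ast) (F : seq nat) (kk : seq (seq nat)) l :=
  if (l \in F) && isact (st l) then upd st l (nth [::] kk (index l F)) else st l.

Lemma next_stK st T F p l : {subset F <= T} -> p \in opart (actS T st) -> l \in F ->
  next st p l = stK st F (key F p) l.
Proof.
move=> hFT hp hl; rewrite /next /stK (opart_cover _ hp) mem_filter hl hFT // andbT /=.
case: ifP => // _; rewrite /key (nth_map 0) ?index_mem // nth_index //.
Qed.

Lemma face X w S k st : canon S -> k \in S -> Good X S st ->
  xorl (map (fun p => par w (rmk k S) (next st p)) (opart (actS S st))) = par w (rmk k S) st.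
Proof.
move=> hS hk hg; set F := rmk k S.
have hFS : {subset F <= S} by move=> l; rewrite mem_filter => /andP [].
have hcF : canon F.
  rewrite /canon /F /rmk {1}hS -filter_predI; apply: eq_filter => l /=.
  by rewrite mem_filter.
pose G kk := par w F (stK st F kk).
have e1 : forall T, {subset F <= T} -> {in opart (actS T st), forall p, par w F (next st p) = G (key F p)}.
  move=> T hFT p hp; apply: par_ext => l hl; exact: (next_stK hFT hp hl).
have -> : map (fun p => par w F (next st p)) (opart (actS S st)) = map (fun p => G (key F p)) (opart (actS S st)).
  by apply/eq_in_map; exact: e1.
have hA : actS S st = sub3 (isact (st 0) && (0 \in S)) (isact (st 1) && (1 \in S)) (isact (st 2) && (2 \in S)).
  rewrite /actS {1}hS -filter_predI; exact: sub3E.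
have hF : F = sub3 ((0 != k) && (0 \in S)) ((1 != k) && (1 \in S)) ((2 != k) && (2 \in S)).
  rewrite /F /rmk {1}hS -filter_predI; exact: sub3E.
have hAF : [seq l <- actS S st | l \in F] = actS F st.
  rewrite /actS /F /rmk filterC -!filter_predI; apply: eq_in_filter => l hl /=.
  by rewrite mem_filter hl andbT.
have hcount : count (fun l => l \notin F) (actS S st) <= 1.
  rewrite (@eq_in_count _ _ (pred1 k)); last first.
    move=> l; rewrite mem_filter => /andP [_ hlS].
    by rewrite /F mem_filter hlS andbT negbK.
  by rewrite count_uniq_mem ?leq_b1 // filter_uniq // canon_uniq.
have := @comb (isact (st 0) && (0 \in S)) (isact (st 1) && (1 \in S)) (isact (st 2) && (2 \in S)) ((0 != k) && (0 \in S)) ((1 != k) && (1 \in S)) ((2 != k) && (2 \in S)) G; rewrite -hA -hF => /(_ hcount) ->.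
rewrite hAF.
case: (actS F st =P [::]) => hAF0.
  rewrite hAF0 /= addbF /G; apply: par_ext => l hl.
  have : l \notin actS F st by rewrite hAF0.
  by rewrite /stK hl mem_filter hl andbT => /negbTE ->.
have hgF : Good X F st := good_sub hFS hg.
have h3 := canon_all3 hcF; have hu := canon_uniq hcF.
symmetry; apply: parE.
have <- : map (fun p => par w F (next st p)) (opart (actS F st)) = map (fun p => G (key F p)) (opart (actS F st)).
  by apply/eq_in_map; exact: e1.
apply: PNode; first by apply/eqP.
move=> p hp; apply: (@good_par w X F (next st p) h3 hu); exact: (good_child h3 hu hgF hp).
Qed.

Lemma sperner X wS (wF : nat -> seq 'I_C -> bool) S st b : canon S ->
  (forall st', Good X S st' -> actS S st' = [::] ->
     wS (outs S st') = xorl [seq wF k (outs (rmk k S) st') | k <- S]) ->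
  Good X S st -> Par wS S st b -> b = xorl [seq par (wF k) (rmk k S) st | k <- S].
Proof.
move=> hS hleaf hg h; elim: h hg => [st0 h0 | st0 f hne hch IH] hg.
  rewrite hleaf //; congr xorl; apply/eq_in_map => k hk; symmetry; apply: parE; apply: PLeaf.
  by rewrite /actS /rmk filterC -/(actS S st0) h0.
have h3 := canon_all3 hS; have hu := canon_uniq hS.
have -> : map f (opart (actS S st0)) = map (fun p => xorl [seq par (wF k) (rmk k S) (next st0 p) | k <- S]) (opart (actS S st0)).
  apply/eq_in_map => p hp; exact: IH p hp (good_child h3 hu hg hp).
rewrite xorl_swap; congr xorl; apply/eq_in_map => k hk.
exact: (face _ hS hk hg).
Qed.

Lemma par_allfalse X w S st b :
  (forall st', Good X S st' -> actS S st' = [::] -> w (outs S st') = false) ->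
  canon S -> Good X S st -> Par w S st b -> b = false.
Proof.
move=> hleaf hS hg h; elim: h hg => [st0 h0 | st0 f hne hch IH] hg; first exact: hleaf.
have h3 := canon_all3 hS; have hu := canon_uniq hS.
have -> : map f (opart (actS S st0)) = map (fun _ => false) (opart (actS S st0)).
  apply/eq_in_map => p hp; exact: IH p hp (good_child h3 hu hg hp).
by rewrite xorl_false.
Qed.

Lemma par_single X w l st b beta : l < 3 ->
  (forall st', Good X [:: l] st' -> actS [:: l] st' = [::] -> w (outs [:: l] st') = beta) ->
  Good X [:: l] st -> Par w [:: l] st b -> b = beta.
Proof.
move=> hl hleaf hg h; elim: h hg => [st0 h0 | st0 f hne hch IH] hg; first exact: hleaf.
have h3 : all (fun l => l < 3) [:: l] by rewrite /= hl.
have hA : actS [:: l] st0 = [:: l] by move: hne; rewrite /actS /=; case: (isact (st0 l)).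
have hp : [:: [:: l]] \in opart (actS [:: l] st0) by rewrite hA inE.
rewrite hA /= addbF; apply: (IH _ hp); exact: (good_child h3 (isT : uniq [:: l]) hg hp).
Qed.


Hypothesis sol : solves_cycle_agreement Delta.
Hypothesis hc : 3 <= c.

Lemma leaf_cfg X S st : Good X S st -> actS S st = [::] ->
  exists cfg, reachable Delta X cfg /\ forall l, l \in S -> cstatus cfg (proc l) = Done N (oof (st l)).
Proof.
move=> [r [cfg [hr [hm1 _]]]] hA; exists cfg; split => // l hl.
have : l \notin actS S st by rewrite hA.
by rewrite hm1 // mem_filter hl andbT; case: (st l).
Qed.

Lemma leaf_agree X S st l m : Good X S st -> actS S st = [::] -> l \in S -> m \in S ->
  (oof (st l) == oof (st m)) || cycle_adj (oof (st l)) (oof (st m)).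
Proof.
move=> hg hA hl hm; have [cfg [hr hs]] := leaf_cfg hg hA.
exact: (sol hr).1 _ _ _ _ (hs l hl) (hs m hm).
Qed.

Lemma osp_same (u y : 'I_C) : on_shortest_path u u y -> y = u.
Proof.
move=> [p [[_ hmin] hy]]; have := hmin [::]; rewrite /cycle_walk /= eqxx => /(_ isT).
case: p {hmin} hy => [|w p]; last by []. by rewrite inE => /eqP.
Qed.

Lemma osp_adj (u v y : 'I_C) : cycle_adj u v -> on_shortest_path u v y -> y = u \/ y = v.
Proof.
move=> huv [p [[hw hmin] hy]]; have := hmin [:: v]; rewrite /cycle_walk /= huv eqxx => /(_ isT).
case: p {hmin} hw hy => [|w [|w' p]] //=.
  by rewrite /cycle_walk /= => /eqP -> ; rewrite inE => /eqP; left.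
rewrite /cycle_walk /= => /andP [_ /eqP ->]; rewrite !inE => /orP [] /eqP; by [left | right].
Qed.

Lemma adjC (u v : 'I_C) : cycle_adj u v = cycle_adj v u.
Proof. by rewrite /cycle_adj orbC. Qed.

Lemma leaf_hull X S st l (u v : 'I_C) : (forall p, X p = u \/ X p = v) -> (u = v \/ cycle_adj u v) ->
  Good X S st -> actS S st = [::] -> l \in S -> oof (st l) = u \/ oof (st l) = v.
Proof.
move=> hX huv hg hA hl; have [cfg [hr hs]] := leaf_cfg hg hA.
have [p [q hpq]] := (sol hr).2 _ _ (hs l hl).
case: (hX p) hpq => ->; case: (hX q) => -> h.
- by left; exact: osp_same h.
- case: huv => [e | a]; first by left; move: h; rewrite -e; exact: osp_same.
  exact: osp_adj a h.
- case: huv => [e | a]; first by left; move: h; rewrite -e; exact: osp_same.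
  by rewrite adjC in a; case: (osp_adj a h); [right | left].
- by right; exact: osp_same h.
Qed.

Definition vtx k : 'I_C := inord (k %% C).
Lemma vtxK k : val (vtx k) = k %% C.
Proof. by apply: inordK; rewrite ltn_mod. Qed.

Lemma succ_mod x : x < C -> x.+1 %% C = if x.+1 == C then 0 else x.+1.
Proof. by move=> h; case: eqP => [-> | h']; [rewrite modnn | rewrite modn_small //; lia]. Qed.

Lemma adjE (a b : 'I_C) : cycle_adj a b =
  [|| val b == val a + 1, (val a == C - 1) && (val b == 0), val a == val b + 1 | (val b == C - 1) && (val a == 0)].
Proof.
have ha : val a < C by exact: ltn_ord a.
have hb : val b < C by exact: ltn_ord b.
rewrite /cycle_adj !succ_mod //.
case: ((val a).+1 =P C) => h1; case: ((val b).+1 =P C) => h2; lia.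
Qed.

Definition eindv (a b : 'I_C) := ((val a == 0) && (val b == 1)) || ((val a == 1) && (val b == 0)).
Definition weind (ys : seq 'I_C) := if ys is [:: a; b] then eindv a b else false.
Definition hw (ys : seq 'I_C) := if ys is [:: a] then val a == 1 else false.
Definition wz (ys : seq 'I_C) := false.

Lemma tri_even (y0 y1 y2 : 'I_C) : (y0 == y1) || cycle_adj y0 y1 -> (y0 == y2) || cycle_adj y0 y2 ->
  (y1 == y2) || cycle_adj y1 y2 -> xorl [:: eindv y1 y2; eindv y0 y2; eindv y0 y1] = false.
Proof.
rewrite !adjE /eindv -!val_eqE /=.
apply: tri_nat; [exact: hc | exact: ltn_ord | exact: ltn_ord | exact: ltn_ord].
Qed.

Definition st0 (X : 'I_N -> 'I_C) : nat -> ast := fun l => AAct (SInit (proc l) (X (proc l))).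

Lemma good_init X S : Good X S (st0 X).
Proof. by exists 1, (init_config X); split; [exact: rt_refl | split]. Qed.


Definition Lb j := if odd j then 1 else 2.
Definition stv (a : 'I_C) (b : 'I_C) : nat -> ast :=
  fun l => AAct (SInit (proc l) (if l == 0 then a else b)).
Definition sp j := par weind [:: 0; Lb j] (stv (vtx 0) (vtx j)).

Lemma vtx_adj j : cycle_adj (vtx j) (vtx j.+1).
Proof. by rewrite /cycle_adj !vtxK -[(j %% C).+1]addn1 modnDml addn1 eqxx. Qed.

Lemma Lb3 j : Lb j < 3.
Proof. by rewrite /Lb; case: (odd j). Qed.

Lemma canon_spoke j : canon [:: 0; Lb j].
Proof. by rewrite /Lb; case: (odd j). Qed.

Lemma par_good w X S st : canon S -> Good X S st -> Par w S st (par w S st).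
Proof. move=> hS; exact: good_par (canon_all3 hS) (canon_uniq hS). Qed.

Definition Xj j (p : 'I_N) := if val p == Lb j then vtx j else if val p == Lb j.+1 then vtx j.+1 else vtx 0.
Definition Xr j (p : 'I_N) := if val p == Lb j.+1 then vtx j.+1 else vtx j.

Lemma rim_false j : 0 < j < C -> par weind [:: 1; 2] (st0 (Xj j)) = false.
Proof.
move=> hj.
rewrite (@par_ext _ _ _ (st0 (Xr j))); last first.
  move=> l; rewrite !inE => /orP [] /eqP ->; rewrite /st0 /Xj /Xr !procK // /Lb /=;
  by case: (odd j).
have hS : canon [:: 1; 2] by [].
apply: (par_allfalse _ hS (good_init (Xr j) _) (par_good _ hS (good_init _ _))).
move=> st' hg hA; rewrite /outs /= .
have hX : forall p, Xr j p = vtx j \/ Xr j p = vtx j.+1.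
  by move=> p; rewrite /Xr; case: ifP; [right | left].
have hadj : vtx j = vtx j.+1 \/ cycle_adj (vtx j) (vtx j.+1) by right; exact: vtx_adj.
have e1 : val (vtx j) = j by rewrite vtxK modn_small //; case/andP: hj.
have e2 : val (vtx j.+1) = if j.+1 == C then 0 else j.+1.
  by rewrite vtxK succ_mod //; case/andP: hj.
have hv : forall y : 'I_C, y = vtx j \/ y = vtx j.+1 -> (val y == j) || (val y == if j.+1 == C then 0 else j.+1).
  by move=> y [->|->]; rewrite ?e1 ?e2 eqxx ?orbT.
rewrite /eindv; apply: (rim_nat (C := C) (j := j)) => //.
  exact: hv (leaf_hull hX hadj hg hA (_ : 1 \in [:: 1; 2])).
exact: hv (leaf_hull hX hadj hg hA (_ : 2 \in [:: 1; 2])).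
Qed.

Lemma spoke_eq j : 0 < j -> par weind [:: 0; Lb j] (st0 (Xj j)) = sp j.
Proof.
move=> hj; rewrite /sp; apply: par_ext => l; rewrite !inE => /orP [] /eqP ->;
  rewrite /st0 /stv /Xj ?procK ?Lb3 // /Lb /=; by case: (odd j).
Qed.

Lemma spoke_eq' j : 0 < j -> par weind [:: 0; Lb j.+1] (st0 (Xj j)) = sp j.+1.
Proof.
move=> hj; rewrite /sp; apply: par_ext => l; rewrite !inE => /orP [] /eqP ->;
  rewrite /st0 /stv /Xj ?procK ?Lb3 // /Lb /=; by case: (odd j).
Qed.

Lemma tri j : 0 < j < C -> sp j = sp j.+1.
Proof.
move=> hj; set X := Xj j.
have hS : canon lab3 by [].
have hg := good_init X lab3.
have hP := par_good wz hS hg.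
have h0 : par wz lab3 (st0 X) = false by apply: (par_allfalse _ hS hg hP).
have hleaf : forall st', Good X lab3 st' -> actS lab3 st' = [::] ->
    wz (outs lab3 st') = xorl [seq (fun _ => weind) k (outs (rmk k lab3) st') | k <- lab3].
  move=> st' hg' hA; rewrite /= /wz; symmetry.
  by apply: tri_even; apply: (leaf_agree hg' hA).
have h1 := @sperner X wz (fun _ => weind) lab3 (st0 X) _ hS hleaf hg hP.
rewrite h0 /= rim_false // in h1.
have hj0 : 0 < j by case/andP: hj.
have e1 := spoke_eq hj0; have e2 := spoke_eq' hj0.
move: e1 e2 h1; rewrite /Lb /=; case: (odd j) => /= -> ->;
  by case: (sp j); case: (sp j.+1).
Qed.


Lemma vtx0 : val (vtx 0) = 0.
Proof. by rewrite vtxK mod0n. Qed.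
Lemma vtx1 : val (vtx 1) = 1.
Proof. by rewrite vtxK modn_small //; lia. Qed.

Lemma spC : sp C = false.
Proof.
have hS := canon_spoke C.
pose X0 := fun _ : 'I_N => vtx 0.
rewrite /sp (@par_ext _ _ _ (st0 X0)); last first.
  move=> l; rewrite !inE => /orP [] /eqP ->; rewrite /st0 /stv //=.
  have -> : Lb C == 0 = false by rewrite /Lb; case: (odd C).
  by rewrite /vtx modnn ?mod0n.
apply: (par_allfalse _ hS (good_init X0 _) (par_good _ hS (good_init _ _))).
move=> st' hg hA; rewrite /outs /=.
have hX : forall p, X0 p = vtx 0 \/ X0 p = vtx 0 by move=> p; left.
have hadj : vtx 0 = vtx 0 \/ cycle_adj (vtx 0) (vtx 0) by left.
have hm : Lb C \in [:: 0; Lb C] by rewrite !inE eqxx orbT.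
case: (leaf_hull hX hadj hg hA (_ : 0 \in [:: 0; Lb C])) => // ->;
by case: (leaf_hull hX hadj hg hA hm) => ->; rewrite /eindv vtx0.
Qed.

Lemma sp1 : sp 1 = true.
Proof.
have hS : canon [:: 0; 1] by [].
pose X01 := fun p : 'I_N => if val p == 1 then vtx 1 else vtx 0.
rewrite /sp /= (@par_ext _ _ _ (st0 X01)); last first.
  by move=> l; rewrite !inE => /orP [] /eqP ->; rewrite /st0 /stv /X01 procK.
have hg := good_init X01 [:: 0; 1].
have hX : forall p, X01 p = vtx 0 \/ X01 p = vtx 1.
  by move=> p; rewrite /X01; case: ifP; [right | left].
have hadj : vtx 0 = vtx 1 \/ cycle_adj (vtx 0) (vtx 1) by right; exact: vtx_adj.
have hleaf : forall st', Good X01 [:: 0; 1] st' -> actS [:: 0; 1] st' = [::] ->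
    weind (outs [:: 0; 1] st') = xorl [seq (fun _ => hw) k (outs (rmk k [:: 0; 1]) st') | k <- [:: 0; 1]].
  move=> st' hg' hA; rewrite /=.
  case: (leaf_hull hX hadj hg' hA (_ : 0 \in [:: 0; 1])) => // ->;
  case: (leaf_hull hX hadj hg' hA (_ : 1 \in [:: 0; 1])) => // ->;
  by rewrite /eindv ?vtx0 ?vtx1.
have -> : Lb 1 = 1 by []. etransitivity; first exact: (@sperner X01 weind (fun _ => hw) [:: 0; 1] (st0 X01) _ hS hleaf hg (par_good _ hS hg)). rewrite /=.
have hs1 : [:: 1] = [:: 1] by [].
pose X1 := fun _ : 'I_N => vtx 1.
pose X0 := fun _ : 'I_N => vtx 0.
rewrite (@par_ext _ [:: 1] _ (st0 X1)); last first.
  by move=> l; rewrite !inE => /eqP ->; rewrite /st0 /X01 /X1 procK.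
rewrite (@par_ext _ [:: 0] _ (st0 X0)); last first.
  by move=> l; rewrite !inE => /eqP ->; rewrite /st0 /X01 /X0 procK.
have hc1 : canon [:: 1] by [].
have hc0 : canon [:: 0] by [].
rewrite (par_single (beta := true) _ _ (good_init X1 _) (par_good _ hc1 (good_init _ _))) //; last first.
  move=> st' hg' hA; rewrite /=.
  have hX1 : forall p, X1 p = vtx 1 \/ X1 p = vtx 1 by move=> p; left.
  by case: (leaf_hull hX1 (or_introl erefl) hg' hA (_ : 1 \in [:: 1])) => // ->; rewrite vtx1.
rewrite (@par_single X0 hw 0 (st0 X0) _ false _ _ (good_init X0 _) (par_good _ hc0 (good_init _ _))) //.
move=> st' hg' hA; rewrite /=.
have hX0 : forall p, X0 p = vtx 0 \/ X0 p = vtx 0 by move=> p; left.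
by case: (leaf_hull hX0 (or_introl erefl) hg' hA (_ : 0 \in [:: 0])) => // ->; rewrite vtx0.
Qed.

Lemma contra : False.
Proof.
have h : forall j, 0 < j <= C -> sp j = sp 1.
  elim => [|j IH] //; case: j IH => [|j] IH hj //.
  have hj' : j.+2 <= C by case/andP: hj.
  rewrite -(tri (j := j.+1)); first by apply: IH; exact: ltnW hj'.
  by [].

by move: (h C); rewrite spC sp1 leqnn => /(_ isT).
Qed.

End Model.

Theorem mainTheorem1 (c n : nat) (hc : 4 <= c) (hn : 3 <= n) :
  ~ exists Delta : algorithm n c,
      wait_free Delta /\ solves_cycle_agreement Delta.
Proof.
case: n hn => [|[|[|n']]] // _; case: c hc => [|[|[|[|c']]]] // _.
move=> [Delta [hwf hsol]].
exact: (@contra n' c'.+3 Delta hwf hsol).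
Qed.
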